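(* Let $h>0$, $\rho>0$, and $\lambda_1=\delta_1e^{\mathrm{i}\theta_1/2}$ with $\delta_1>0$, $\theta_1\in(0,\pi)$, and $\mu_\pm(\lambda_1)\neq0$, where $$\mu_+(\lambda)=\Big(\frac{2\mathrm{i}}{h\lambda}-\lambda\Big)\frac{1+\frac{\mathrm{i}h\rho^2}{2}}{1-\frac{\mathrm{i}h\rho^2}{2}},\qquad \mu_-(\lambda)=\frac{2\mathrm{i}}{h\lambda}+\lambda .$$ Let $e^{\mathrm{i}\Xi_{1,n}(t)}:=\left(\frac{\mu_+(\lambda_1)/\mu_-(\lambda_1)}{|\mu_+(\lambda_1)/\mu_-(\lambda_1)|}\right)^{n}\exp\!\Big(\mathrm{i}t\,\mathrm{Im}\Big[\frac{\mathrm{i}}{2}\Big(\frac{1}{\rho^2}-\rho^2\Big)-\frac{\mathrm{i}}{2}\Big(\lambda_1^2-\frac{1}{\lambda_1^2}\Big)\Big]\Big)$. Then $e^{\mathrm{i}\Xi_{1,n}(t)}=1$ for all $n\in\mathbb{Z}$, $t\in\mathbb{R}$ (equivalently: $\mu_+(\lambda_1)/\mu_-(\lambda_1)$ is a positive real number and $\rho^{-2}-\rho^2=(\delta_1^2-\delta_1^{-2})\cos\theta_1$) if and only if one of the following holds: (a) either ($\rho<1$ and $h>2/\rho^4$) or ($\rho>1$ and $0<h<2/\rho^4$), and $$\delta_1=\frac{1}{\rho}\sqrt{\frac{2}{h}},\qquad \cos\theta_1=\frac{2h(1-\rho^4)}{4-h^2\rho^4};$$ (b) $\rho=1$, $h=2$,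 $\delta_1=1$, and $\theta_1\in(\pi/2,\pi)$ (i.e. $\arg\lambda_1\in(\pi/4,\pi/2)$).
   Context: This condition characterizes when the one-breather solution on the nonzero constant background $(U,R,Q)=(\rho,\rho,\rho^{-1})$ of the semi-discrete MTM system has no periodic oscillations; $\mu_\pm$ are the multipliers of the two fundamental solutions $(\rho,-\lambda)^T\mu_+^n e^{\frac{\mathrm{i}}{2}(\rho^{-2}-\rho^2)t}$ and $(\lambda,\rho)^T\mu_-^n e^{\frac{\mathrm{i}}{2}(\lambda^2-\lambda^{-2})t}$ of the Lax pair at that background, and $\Xi_{1,n}$ is the imaginary part of the phase difference between them. *)

(* Defs.v *)
From Stdlib Require Import Reals Lra ZArith.
Open Scope R_scope.

Record C := mkC { Re : R ; Im : R }.

Definition RtoC (x : R) : C := mkC x 0.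
Definition Czero : C := RtoC 0.
Definition Cone : C := RtoC 1.
Definition Ci : C := mkC 0 1.
Definition Cadd (z w : C) : C := mkC (Re z + Re w) (Im z + Im w).
Definition Copp (z : C) : C := mkC (- Re z) (- Im z).
Definition Csub (z w : C) : C := Cadd z (Copp w).
Definition Cmul (z w : C) : C :=
  mkC (Re z * Re w - Im z * Im w) (Re z * Im w + Im z * Re w).
Definition Cinv (z : C) : C :=
  mkC (Re z / (Re z ^ 2 + Im z ^ 2)) (- Im z / (Re z ^ 2 + Im z ^ 2)).
Definition Cdiv (z w : C) : C := Cmul z (Cinv w).
Definition Cnorm (z : C) : R := sqrt (Re z ^ 2 + Im z ^ 2).
Definition Cexpi (s : R) : C := mkC (cos s) (sin s).
Definition Cpolar (r a : R) : C := mkC (r * cos a) (r * sin a).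

Fixpoint Cpow (z : C) (n : nat) : C :=
  match n with O => Cone | S m => Cmul z (Cpow z m) end.
Definition CpowZ (z : C) (n : Z) : C :=
  match n with
  | Z0 => Cone
  | Zpos p => Cpow z (Pos.to_nat p)
  | Zneg p => Cinv (Cpow z (Pos.to_nat p))
  end.

Definition mu_plus (h rho : R) (lam : C) : C :=
  Cmul (Csub (Cdiv (mkC 0 2) (Cmul (RtoC h) lam)) lam)
       (Cdiv (mkC 1 (h * rho ^ 2 / 2)) (mkC 1 (- (h * rho ^ 2 / 2)))).

Definition mu_minus (h : R) (lam : C) : C :=
  Cadd (Cdiv (mkC 0 2) (Cmul (RtoC h) lam)) lam.

Definition expiXi (h rho : R) (lam : C) (n : Z) (t : R) : C :=
  let q := Cdiv (mu_plus h rho lam) (mu_minus h lam) in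
  let phase :=
    Im (Csub (Cmul (mkC 0 (1/2)) (RtoC (1 / rho ^ 2 - rho ^ 2)))
             (Cmul (mkC 0 (1/2)) (Csub (Cmul lam lam) (Cinv (Cmul lam lam))))) in
  Cmul (CpowZ (Cdiv q (RtoC (Cnorm q))) n) (Cexpi (t * phase)).

(* Main.v *)
Require Import Defs.
From Stdlib Require Import Reals ZArith.
From Stdlib Require Import Lra Psatz.
Open Scope R_scope.

Definition qq h rho lam := Cdiv (mu_plus h rho lam) (mu_minus h lam).
Ltac sidec :=
  repeat split; apply Rgt_not_eq;
  repeat (apply Rplus_lt_0_compat || apply Rmult_lt_0_compat || apply Rplus_le_lt_0_compat || apply Rplus_lt_le_0_compat);
  try nra; try lra.
Lemma Im_qq h r p s : 0 < h -> 0 < r -> 0 < p -> 0 < s ->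
  let u := p^2+s^2 in
  Im (qq h r (mkC p s)) = 4 * h * u * ((p^2-s^2)*(4 - h^2*r^4) + r^2*(4-h^2*u^2))
     / ((4 + h^2*r^4) * ((2*s + h*p*u)^2 + (2*p+h*s*u)^2)).
Proof.
intros hh hr hp hs u. unfold u, qq, mu_plus, mu_minus, Cdiv, Cmul, Csub, Cadd, Cinv, Copp, RtoC. simpl.
field. sidec.
Qed.
Lemma Re_qq h r p s : 0 < h -> 0 < r -> 0 < p -> 0 < s ->
  let u := p^2+s^2 in
  Re (qq h r (mkC p s)) = u * ((4 - h^2*r^4)*(4-h^2*u^2) - 16*h^2*r^2*(p^2-s^2))
     / ((4 + h^2*r^4) * ((2*s + h*p*u)^2 + (2*p+h*s*u)^2)).
Proof.
intros hh hr hp hs u. unfold u, qq, mu_plus, mu_minus, Cdiv, Cmul, Csub, Cadd, Cinv, Copp, RtoC. simpl.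
field. sidec.
Qed.

Definition ph rho (lam : Defs.C) :=
    Im (Csub (Cmul (mkC 0 (1/2)) (RtoC (1 / rho ^ 2 - rho ^ 2)))
             (Cmul (mkC 0 (1/2)) (Csub (Cmul lam lam) (Cinv (Cmul lam lam))))).
Lemma ph_eq r p s : 0 < r -> 0 < p -> 0 < s ->
  ph r (mkC p s) = / 2 * (1/r^2 - r^2) - / 2 * ((p^2-s^2) - (p^2-s^2)/(p^2+s^2)^2).
Proof.
intros hr hp hs. unfold ph, Cdiv, Cmul, Csub, Cadd, Cinv, Copp, RtoC. simpl.
field. repeat split; apply Rgt_not_eq; [nra|lra|]. assert (0 < p*s) by nra. nra.
Qed.

Lemma Cone_mul_Cone : Cmul Cone Cone = Cone.
Proof. unfold Cmul, Cone, RtoC; simpl; f_equal; ring. Qed.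
Lemma Cpow_one n : Cpow Cone n = Cone.
Proof. induction n; simpl; [reflexivity| rewrite IHn; apply Cone_mul_Cone]. Qed.
Lemma CpowZ_one n : CpowZ Cone n = Cone.
Proof. destruct n; simpl; try reflexivity; rewrite Cpow_one; try reflexivity.
unfold Cinv, Cone, RtoC; simpl; f_equal; field. Qed.

Lemma Cmul_one (w : Defs.C) : Cmul w Cone = w.
Proof. destruct w; unfold Cmul, Cone, RtoC; simpl; f_equal; ring. Qed.
Lemma Cone_mul (w : Defs.C) : Cmul Cone w = w.
Proof. destruct w; unfold Cmul, Cone, RtoC; simpl; f_equal; ring. Qed.
Lemma Cexpi0 : Cexpi 0 = Cone.
Proof. unfold Cexpi, Cone, RtoC; rewrite cos_0, sin_0; reflexivity. Qed.

Lemma reduce (q : Defs.C) (f : R) :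
  (forall (n : Z) (t : R), Cmul (CpowZ (Cdiv q (RtoC (Cnorm q))) n) (Cexpi (t * f)) = Cone)
  <-> (Im q = 0 /\ 0 < Re q /\ f = 0).
Proof.
set (z := Cdiv q (RtoC (Cnorm q))).
set (r := Cnorm q).
assert (ER : Re z = Re q * (r / (r^2+0^2)) - Im q * (-0/(r^2+0^2))) by reflexivity.
assert (EI : Im z = Re q * (-0/(r^2+0^2)) + Im q * (r / (r^2+0^2))) by reflexivity.
assert (Hr0 : 0 <= r) by apply sqrt_pos.
assert (Hr2 : r^2 = Re q ^2 + Im q^2) by (unfold r, Cnorm; rewrite pow2_sqrt; nra).
split.
- intros H.
  assert (H1 := H 1%Z 0). rewrite Rmult_0_l, Cexpi0, Cmul_one in H1.
  change (Cmul z Cone = Cone) in H1. rewrite Cmul_one in H1.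
  assert (E1 : Re z = 1) by (rewrite H1; reflexivity).
  assert (E2 : Im z = 0) by (rewrite H1; reflexivity).
  assert (Hr : 0 < r).
  { destruct (Req_dec r 0) as [E|E]; [|lra].
    exfalso. assert (Re q = 0) by nra. assert (Im q = 0) by nra.
    rewrite ER in E1. rewrite H0, H2 in E1. lra. }
  rewrite ER in E1. rewrite EI in E2.
  replace (r^2+0^2) with (r^2) in E1, E2 by ring.
  assert (Eb : Im q = 0).
  { assert (Im q / r = 0) by (rewrite <- E2; field; lra).
    replace (Im q) with (Im q / r * r) by (field; lra). rewrite H0; ring. }
  rewrite Eb in E1.
  assert (Ea : Re q = r).
  { assert (Re q / r = 1) by (rewrite <- E1; field; lra).
    replace (Re q) with (Re q / r * r) by (field; lra). rewrite H0; ring. }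
  split; [exact Eb | split; [lra|]].
  destruct (Req_dec f 0) as [Ef|Ef]; [exact Ef|exfalso].
  assert (H2 := H 0%Z (PI / f)). simpl in H2. rewrite Cone_mul in H2.
  replace (PI / f * f) with PI in H2 by (field; exact Ef).
  assert (E3 : Re (Cexpi PI) = Re Cone) by (rewrite H2; reflexivity).
  unfold Cexpi in E3; simpl in E3. rewrite cos_PI in E3. lra.
- intros [Hb [Ha Hf]]. intros n t.
  assert (Er : r = Re q) by (apply Rsqr_inj; unfold Rsqr; nra).
  assert (E : z = Cone).
  { destruct z as [z1 z2] eqn:Ez. simpl in ER, EI. unfold Cone, RtoC. f_equal.
    - rewrite ER, Hb, Er. field. lra.
    - rewrite EI, Hb, Er. field. lra. }
  rewrite E, CpowZ_one, Hf, Rmult_0_r, Cexpi0. apply Cone_mul.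
Qed.


Lemma pos_sq_inj a b : 0 < a -> 0 < b -> a^2 = b^2 -> a = b.
Proof. intros. nra. Qed.

Lemma alg h r u x : 0 < h -> 0 < r -> 0 < u -> -u < x < u ->
  ( x*(4 - h^2*r^4) + r^2*(4 - h^2*u^2) = 0 /\
    0 < (4-h^2*r^4)*(4-h^2*u^2) - 16*h^2*r^2*x /\
    1/r^2 - r^2 = x - x/u^2 )
  <->
  ( ( ((r < 1 /\ h > 2 / r^4) \/ (r > 1 /\ 0 < h < 2 / r^4))
      /\ u = 2 / (h * r^2) /\ x = u * (2 * h * (1 - r^4) / (4 - h^2 * r^4)) )
    \/ (r = 1 /\ h = 2 /\ u = 1 /\ x < 0) ).
Proof.
intros hh hr hu [hx1 hx2].
assert (hr2 : 0 < r^2) by nra.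
assert (hr4 : 0 < r^4) by nra.
split.
- intros [HI [HR HP]].
  assert (HP' : u^2*(1-r^4) = x*r^2*(u^2-1)).
  { apply (Rmult_eq_reg_r (/(r^2*u^2))).
    - replace (u ^ 2 * (1 - r ^ 4) * / (r ^ 2 * u ^ 2)) with (1/r^2 - r^2) by (field; lra).
      rewrite HP. field. lra.
    - apply Rgt_not_eq. apply Rinv_0_lt_compat. apply Rmult_lt_0_compat; [lra|]. apply pow_lt; lra. }
  clear HP.
  destruct (Req_dec (4 - h^2*r^4) 0) as [E0|E0].
  +
    assert (Hhr : h*r^2 = 2) by (apply pos_sq_inj; [apply Rmult_lt_0_compat; lra|lra|]; replace ((h*r^2)^2) with (h^2*r^4) by ring; lra).
    assert (Hhu : h*u = 2).
    { apply pos_sq_inj; [apply Rmult_lt_0_compat; lra|lra|]. rewrite E0 in HI.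
      assert (4 - h^2*u^2 = 0) by (apply (Rmult_eq_reg_l (r^2)); lra).
      replace ((h*u)^2) with (h^2*u^2) by ring; lra. }
    assert (Hur : u = r^2) by nra.
    subst u.
    assert (Hr4 : r^4 = 1).
    { assert ((1-r^4)*(r^2+x)*r^2 = 0) by nra.
      assert (0 < r^2 + x) by lra. 
      apply Rmult_integral in H. destruct H as [H|H]; [|nra].
      apply Rmult_integral in H. destruct H as [H|H]; nra. }
    assert (Hr1 : r = 1).
    { assert (r^2 = 1) by nra. nra. }
    subst r. right. split; [reflexivity|]. split; [nra|]. split; [nra|].
    rewrite E0 in HR. nra.
  + left.
    set (E := 4 - h^2*r^4) in *.
    assert (HQ : (u^2 - r^4)*(h^2*r^4*u^2 - 4) = 0).
    { assert (u^2*(1-r^4)*E = -r^4*(4-h^2*u^2)*(u^2-1)).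
      { rewrite HP'. replace (x*r^2*(u^2-1)*E) with ((x*E)*r^2*(u^2-1)) by ring.
        replace (x*E) with (-(r^2*(4-h^2*u^2))) by lra. ring. }
      unfold E in H. nra. }
    apply Rmult_integral in HQ. destruct HQ as [HQ|HQ].
    * exfalso. assert (u = r^2) by (apply pos_sq_inj; nra).
      subst u. assert (x*E = - r^2*E) by (unfold E in *; nra).
      assert (x = -r^2) by (apply (Rmult_eq_reg_r E); [lra|exact E0]). lra.
    * assert (Hhr : 0 < h*r^2) by (apply Rmult_lt_0_compat; lra).
      assert (Hhu : h*r^2*u = 2).
      { apply pos_sq_inj; [apply Rmult_lt_0_compat; lra|lra|].
        replace ((h*r^2*u)^2) with (h^2*r^4*u^2) by ring; lra. }
      assert (Hu : u = 2/(h*r^2)) by (rewrite <- Hhu; field; lra).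
      assert (Hx : x*E*r^2 = 4*(1-r^4)) by nra.
      assert (HRE : (E*(4-h^2*u^2) - 16*h^2*r^2*x) * E * r^4 = 4*(r^4-1)*(E^2+16*h^2*r^4)).
      { replace ((E*(4-h^2*u^2) - 16*h^2*r^2*x) * E * r^4) with
          (E^2*((4-h^2*u^2)*r^4) - 16*h^2*r^4*(x*E*r^2)) by (unfold E; ring).
        rewrite Hx. replace ((4-h^2*u^2)*r^4) with (4*r^4 - 4) by nra. ring. }
      assert (Hpos : 0 < E^2 + 16*h^2*r^4) by nra.
      assert (HxE : x = u * (2 * h * (1 - r^4) / E)).
      { apply (Rmult_eq_reg_r (E*r^2)); [|apply Rmult_integral_contrapositive; split; lra].
        replace (x*(E*r^2)) with (x*E*r^2) by ring. rewrite Hx, Hu. field. split; lra. }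
      assert (HK : (x+u)*(E*r^2*h) = -2*((h*r^4-2)*(h+2))).
      { replace ((x+u)*(E*r^2*h)) with ((x*E*r^2)*h + E*(h*r^2*u)) by ring.
        rewrite Hx, Hhu. unfold E. ring. }
      assert (Hxu : 0 < x + u) by lra.
      set (Rv := E*(4-h^2*u^2) - 16*h^2*r^2*x) in *.
      destruct (Rtotal_order r 1) as [Hr1|[Hr1|Hr1]].
      -- assert (Hr41 : r^4 < 1).
        { replace (r^4) with ((r^2)^2) by ring. assert (r^2 < 1) by nra. nra. }
        assert (En : E < 0).
        { destruct (Rlt_or_le E 0) as [?|Ep]; [assumption|exfalso].
          assert (0 <= Rv*E*r^4).
          { apply Rmult_le_pos; [apply Rmult_le_pos|]; lra. }
          nra. }
        assert (Hc : h*r^4 > 2).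
        { assert ((x+u)*(E*r^2*h) < 0).
          { apply Rmult_pos_neg; [lra|]. 
            replace (E*r^2*h) with (-((-E)*r^2*h)) by ring.
            apply Ropp_lt_gt_0_contravar. apply Rmult_lt_0_compat; [apply Rmult_lt_0_compat|]; lra. }
          nra. }
        split; [left; split; [lra|] | split; assumption].
        apply Rlt_gt. apply (Rmult_lt_reg_r (r^4)); [lra|]. field_simplify; lra.
      -- exfalso. subst r. assert (Rv*E*1^4 = 0) by (rewrite HRE; ring).
        assert (Rv*E <> 0) by (apply Rmult_integral_contrapositive; split; lra). nra.
      -- assert (Hr41 : r^4 > 1).
        { replace (r^4) with ((r^2)^2) by ring. assert (r^2 > 1) by nra. nra. }
        assert (Ep : E > 0).
        { destruct (Rlt_or_le 0 E) as [?|En]; [assumption|exfalso].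
          assert (Rv*E*r^4 <= 0).
          { replace (Rv*E*r^4) with (-(Rv*(-E)*r^4)) by ring.
            rewrite <- Ropp_0. apply Ropp_le_contravar.
            apply Rmult_le_pos; [apply Rmult_le_pos|]; lra. }
          nra. }
        assert (Hc : h*r^4 < 2).
        { assert ((x+u)*(E*r^2*h) > 0).
          { apply Rmult_lt_0_compat; [lra|].
            apply Rmult_lt_0_compat; [apply Rmult_lt_0_compat|]; lra. }
          nra. }
        split; [right; split; [lra|split; [lra|]] | split; assumption].
        apply (Rmult_lt_reg_r (r^4)); [lra|]. field_simplify; lra.
- intros [[Hc [Hu Hx]] | [-> [-> [-> Hx]]]].
  + assert (Hhr : 0 < h*r^2) by (apply Rmult_lt_0_compat; lra).
    assert (Hhu : h*r^2*u = 2) by (rewrite Hu; field; lra).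
    assert (HE : (r < 1 /\ 4 - h^2*r^4 < 0) \/ (r > 1 /\ 4 - h^2*r^4 > 0)).
    { destruct Hc as [[Hr1 Hh]|[Hr1 [_ Hh]]].
      - left. split; [lra|].
        assert (Hr41 : r^4 < 1).
        { replace (r^4) with ((r^2)^2) by ring. assert (r^2 < 1) by nra. nra. }
        assert (h*r^4 > 2).
        { apply Rgt_lt in Hh. apply (Rmult_lt_compat_r (r^4)) in Hh; [|lra].
          replace (2/r^4*r^4) with 2 in Hh by (field; lra). lra. }
        nra.
      - right. split; [lra|].
        assert (Hr41 : r^4 > 1).
        { replace (r^4) with ((r^2)^2) by ring. assert (r^2 > 1) by nra. nra. }
        assert (h*r^4 < 2).
        { apply (Rmult_lt_compat_r (r^4)) in Hh; [|lra].
          replace (2/r^4*r^4) with 2 in Hh by (field; lra). lra. }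
        nra. }
    set (E := 4 - h^2*r^4) in *.
    assert (E0 : E <> 0) by (destruct HE; lra).
    assert (HxE : x*E*r^2 = 4*(1-r^4)) by (rewrite Hx, Hu; field; split; lra).
    assert (HQ : h^2*r^4*u^2 = 4) by (replace (h^2*r^4*u^2) with ((h*r^2*u)^2) by ring; rewrite Hhu; ring).
    split; [|split].
    * apply (Rmult_eq_reg_r (r^2)); [|lra].
      replace ((x * E + r ^ 2 * (4 - h ^ 2 * u ^ 2)) * r^2) with (x*E*r^2 + 4*r^4 - h^2*r^4*u^2) by ring.
      rewrite HxE, HQ. ring.
    * assert (HRE : (E*(4-h^2*u^2) - 16*h^2*r^2*x) * E * r^4 = 4*(r^4-1)*(E^2+16*h^2*r^4)).
      { replace ((E*(4-h^2*u^2) - 16*h^2*r^2*x) * E * r^4) with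
          (E^2*((4-h^2*u^2)*r^4) - 16*h^2*r^4*(x*E*r^2)) by ring.
        rewrite HxE. replace ((4-h^2*u^2)*r^4) with (4*r^4 - 4) by nra. ring. }
      assert (Hpos : 0 < E^2 + 16*h^2*r^4) by nra.
      set (Rv := E*(4-h^2*u^2) - 16*h^2*r^2*x) in *.
      destruct HE as [[Hr1 En]|[Hr1 Ep]].
      -- assert (Hr41 : r^4 < 1).
         { replace (r^4) with ((r^2)^2) by ring. assert (r^2 < 1) by nra. nra. }
         assert (Rv*E*r^4 < 0) by (rewrite HRE; nra).
         destruct (Rlt_or_le 0 Rv) as [?|Rn]; [assumption|exfalso].
         assert (0 <= Rv*E*r^4).
         { replace (Rv*E*r^4) with ((-Rv)*(-E)*r^4) by ring.
           apply Rmult_le_pos; [apply Rmult_le_pos|]; lra. }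
         lra.
      -- assert (Hr41 : r^4 > 1).
         { replace (r^4) with ((r^2)^2) by ring. assert (r^2 > 1) by nra. nra. }
         assert (Rv*E*r^4 > 0) by (rewrite HRE; nra).
         destruct (Rlt_or_le 0 Rv) as [?|Rn]; [assumption|exfalso].
         assert (Rv*E*r^4 <= 0).
         { replace (Rv*E*r^4) with (-((-Rv)*E*r^4)) by ring.
           rewrite <- Ropp_0. apply Ropp_le_contravar.
           apply Rmult_le_pos; [apply Rmult_le_pos|]; lra. }
         lra.
    * assert (HP : u^2*(1-r^4) = x*r^2*(u^2-1)).
      { apply (Rmult_eq_reg_r E); [|exact E0].
        replace (x*r^2*(u^2-1)*E) with ((x*E*r^2)*(u^2-1)) by ring. rewrite HxE.
        unfold E. replace (u ^ 2 * (1 - r ^ 4) * (4 - h ^ 2 * r ^ 4)) with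
           ((1-r^4)*(4*u^2 - h^2*r^4*u^2)) by ring. rewrite HQ. ring. }
      apply (Rmult_eq_reg_r (r^2*u^2)); [|apply Rgt_not_eq; apply Rmult_lt_0_compat; nra].
      replace ((1 / r ^ 2 - r ^ 2) * (r ^ 2 * u ^ 2)) with (u^2*(1-r^4)) by (field; lra).
      rewrite HP. field. lra.
  + split; [ring|split; [nra|field; lra]].
Qed.

Lemma tidy h r d th c A : 0 < h -> 0 < r -> 0 < d -> 0 < th < PI ->
  ((A /\ d^2 = 2/(h*r^2) /\ d^2*cos th = d^2 * c) \/ (r = 1 /\ h = 2 /\ d^2 = 1 /\ d^2*cos th < 0))
  <-> ((A /\ d = (1/r) * sqrt (2/h) /\ cos th = c) \/ (r = 1 /\ h = 2 /\ d = 1 /\ PI/2 < th < PI)).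
Proof.
intros hh hr hd [ht1 ht2].
assert (Hd2 : 0 < d^2) by nra.
assert (Hsq : 0 < sqrt (2/h)) by (apply sqrt_lt_R0; apply Rdiv_lt_0_compat; lra).
assert (Hs2 : sqrt (2/h) * sqrt (2/h) = 2/h) by (apply sqrt_sqrt; apply Rlt_le, Rdiv_lt_0_compat; lra).
assert (Hpos : 0 < 1/r * sqrt (2/h)) by (apply Rmult_lt_0_compat; [apply Rdiv_lt_0_compat|]; lra).
assert (Hcos : cos th < 0 <-> PI/2 < th).
{ split.
  - intros Hc. destruct (Rlt_or_le (PI/2) th) as [?|Hle]; [assumption|].
    assert (0 <= cos th) by (apply cos_ge_0; lra). lra.
  - intros Hl. apply cos_lt_0; lra. }
split.
- intros [[HA [Hu Hx]] | [Hr [Hh [Hu Hx]]]].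
  + left. split; [exact HA|split].
    * apply pos_sq_inj; [lra|lra|]. rewrite Hu.
      replace ((1 / r * sqrt (2 / h)) ^ 2) with (1/r^2 * (sqrt (2/h) * sqrt (2/h))) by (field; lra).
      rewrite Hs2. field; lra.
    * apply (Rmult_eq_reg_l (d^2)); lra.
  + right. split; [exact Hr|split; [exact Hh|split]].
    * apply pos_sq_inj; lra.
    * assert (cos th < 0).
      { destruct (Rlt_or_le (cos th) 0) as [?|Hc]; [assumption|]. nra. }
      split; [apply Hcos|]; assumption.
- intros [[HA [Hu Hx]] | [Hr [Hh [Hu Hx]]]].
  + left. split; [exact HA|split].
    * rewrite Hu. replace ((1 / r * sqrt (2 / h)) ^ 2) with (1/r^2 * (sqrt (2/h) * sqrt (2/h))) by (field; lra).
      rewrite Hs2. field; lra.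
    * rewrite Hx; reflexivity.
  + right. split; [exact Hr|split; [exact Hh|split]].
    * rewrite Hu; ring.
    * assert (cos th < 0) by (apply Hcos; lra). nra.
Qed.


Theorem mainTheorem8 (h rho delta1 theta1 : R)
  (hh : 0 < h) (hrho : 0 < rho) (hdelta : 0 < delta1)
  (htheta : 0 < theta1 < PI)
  (hmup : mu_plus h rho (Cpolar delta1 (theta1 / 2)) <> Czero)
  (hmum : mu_minus h (Cpolar delta1 (theta1 / 2)) <> Czero) :
  (forall (n : Z) (t : R), expiXi h rho (Cpolar delta1 (theta1 / 2)) n t = Cone)
  <->
  ( ( ((rho < 1 /\ h > 2 / rho ^ 4) \/ (rho > 1 /\ 0 < h < 2 / rho ^ 4))
      /\ delta1 = (1 / rho) * sqrt (2 / h)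
      /\ cos theta1 = 2 * h * (1 - rho ^ 4) / (4 - h ^ 2 * rho ^ 4) )
    \/
    ( rho = 1 /\ h = 2 /\ delta1 = 1 /\ PI / 2 < theta1 < PI ) ).
Proof.
set (phi := theta1 / 2).
destruct htheta as [ht1 ht2].
set (p := delta1 * cos phi). set (s := delta1 * sin phi).
assert (Hlam : Cpolar delta1 phi = mkC p s) by reflexivity.
assert (Hp : 0 < p) by (apply Rmult_lt_0_compat; [lra|]; apply cos_gt_0; unfold phi; lra).
assert (Hs : 0 < s) by (apply Rmult_lt_0_compat; [lra|]; apply sin_gt_0; unfold phi; lra).
assert (Hu : p^2 + s^2 = delta1^2).
{ unfold p, s. assert (H := sin2_cos2 phi). unfold Rsqr in H. nra. }
assert (Hx : p^2 - s^2 = delta1^2 * cos theta1).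
{ replace theta1 with (2*phi) by (unfold phi; field). rewrite cos_2a. unfold p, s. ring. }
assert (Hexp : forall n t, expiXi h rho (Cpolar delta1 phi) n t =
   Cmul (CpowZ (Cdiv (qq h rho (mkC p s)) (RtoC (Cnorm (qq h rho (mkC p s))))) n)
        (Cexpi (t * ph rho (mkC p s)))) by (intros; rewrite Hlam; reflexivity).
set (u := p^2+s^2). set (x := p^2-s^2).
assert (HD : 0 < (4 + h^2*rho^4) * ((2*s + h*p*u)^2 + (2*p+h*s*u)^2)).
{ apply Rmult_lt_0_compat; [nra|].
  assert (0 < 2*s + h*p*u).
  { assert (0 < h*p*u) by (unfold u; apply Rmult_lt_0_compat; [apply Rmult_lt_0_compat|]; nra). lra. }
  apply Rplus_lt_le_0_compat; [apply pow_lt; lra | apply pow2_ge_0]. }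
assert (Hu0 : 0 < u) by (unfold u; nra).
assert (Hxu : -u < x < u) by (unfold u, x; split; nra).
rewrite <- (tidy h rho delta1 theta1 _ _ hh hrho hdelta (conj ht1 ht2)).
rewrite <- Hx, <- Hu. change (p^2+s^2) with u; change (p^2-s^2) with x.
rewrite <- (alg h rho u x hh hrho Hu0 Hxu).
transitivity (Im (qq h rho (mkC p s)) = 0 /\ 0 < Re (qq h rho (mkC p s)) /\ ph rho (mkC p s) = 0).
{ rewrite <- reduce. split; intros H n t; [rewrite <- Hexp|rewrite Hexp]; apply H. }
rewrite (Im_qq h rho p s hh hrho Hp Hs), (Re_qq h rho p s hh hrho Hp Hs), (ph_eq rho p s hrho Hp Hs).
change (p^2+s^2) with u; change (p^2-s^2) with x.
set (D := (4 + h^2*rho^4) * ((2*s + h*p*u)^2 + (2*p+h*s*u)^2)) in *.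
set (Iv := x * (4 - h ^ 2 * rho ^ 4) + rho ^ 2 * (4 - h ^ 2 * u ^ 2)).
set (R0 := (4 - h ^ 2 * rho ^ 4) * (4 - h ^ 2 * u ^ 2) - 16 * h ^ 2 * rho ^ 2 * x).
assert (H4hu : 0 < 4*h*u) by nra.
split.
- intros [E1 [E2 E3]]. split; [|split].
  + apply (Rmult_eq_reg_l (4*h*u / D)); [|apply Rgt_not_eq; apply Rdiv_lt_0_compat; lra].
    rewrite Rmult_0_r. rewrite <- E1. field. lra.
  + assert (0 < u * R0 / D * (D/u)) by (apply Rmult_lt_0_compat; [exact E2|apply Rdiv_lt_0_compat; lra]).
    replace (u * R0 / D * (D/u)) with R0 in H by (field; lra). exact H.
  + lra.
- intros [E1 [E2 E3]]. split; [|split].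
  + rewrite E1. unfold Rdiv. rewrite Rmult_0_r, Rmult_0_l. reflexivity.
  + apply Rdiv_lt_0_compat; [apply Rmult_lt_0_compat|]; lra.
  + rewrite E3; ring.
Qed.
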